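(* Let $R$ be a commutative ring with identity and let $A$ be a $2\times 2$ matrix over $R$ whose entries generate the ideal $R$. Then $A$ is equivalent to a diagonal matrix if and only if the submodule of $R^2$ generated by the rows of $A$ contains a unimodular row. Moreover, in this case $A$ is equivalent to a matrix of the form $\begin{pmatrix}1&0\\0&d\end{pmatrix}$ for some $d\in R$.
   Context: Two matrices $A,B\in M_{m,n}(R)$ are equivalent if there exist invertible matrices $P\in M_{m,m}(R)$ and $Q\in M_{n,n}(R)$ with $B=PAQ$. A row $[r_1,\dots,r_n]$ over $R$ is unimodular if $r_1,\dots,r_n$ generate the unit ideal $R$. *)

(* Defs.v *)
From HB Require Import structures.
From mathcomp Require Import all_boot all_order all_algebra.
Set Implicit Arguments. Unset Strict Implicit. Unset Printing Implicit Defensive.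
Import GRing.Theory.
Local Open Scope ring_scope.

Definition mx_equiv (R : comUnitRingType) (m n : nat) (A B : 'M[R]_(m, n)) : Prop :=
  exists (P : 'M[R]_m) (Q : 'M[R]_n),
    P \in unitmx /\ Q \in unitmx /\ B = P *m A *m Q.

Definition unimodular_row (R : comUnitRingType) (n : nat) (r : 'rV[R]_n) : Prop :=
  exists c : 'rV[R]_n, \sum_(j < n) c 0 j * r 0 j = 1.

Definition entries_generate_unit (R : comUnitRingType) (m n : nat) (A : 'M[R]_(m, n)) : Prop :=
  exists c : 'M[R]_(m, n), \sum_(i < m) \sum_(j < n) c i j * A i j = 1.

(* The submodule of R^n generated by the rows of A is { x *m A | x : 'rV_m }. *)
Definition rowspan_has_unimodular (R : comUnitRingType) (m n : nat) (A : 'M[R]_(m, n)) : Prop :=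
  exists x : 'rV[R]_m, unimodular_row (x *m A).

(* Main.v *)
Require Import Defs.
From HB Require Import structures.
From mathcomp Require Import all_boot all_order all_algebra.
From mathcomp Require Import ring.
Import GRing.Theory.
Local Open Scope ring_scope.

Lemma ord2_cases (i : 'I_2) : i = 0 \/ i = 1.
Proof.
case: i => [[|[|//]]] Hi.
  by left; apply/val_inj.
by right; apply/val_inj.
Qed.

Definition mx22 (R : comUnitRingType) (a b c d : R) : 'M[R]_2 :=
  \matrix_(i < 2, j < 2) if i == 0 then (if j == 0 then a else b)
                         else (if j == 0 then c else d).

Arguments mx22 {R}.

Lemma mx22_entries (R : comUnitRingType) (M : 'M[R]_2) :
  M = mx22 (M 0 0) (M 0 1) (M 1 0) (M 1 1).
Proof.
apply/matrixP => i j; rewrite mxE.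
by case: (ord2_cases i) => ->; case: (ord2_cases j) => ->.
Qed.

Arguments mx22_entries {R}.

Lemma mx22_eq (R : comUnitRingType) (M N : 'M[R]_2) :
  M 0 0 = N 0 0 -> M 0 1 = N 0 1 -> M 1 0 = N 1 0 -> M 1 1 = N 1 1 -> M = N.
Proof.
move=> h1 h2 h3 h4; rewrite (mx22_entries M) (mx22_entries N).
by rewrite h1 h2 h3 h4.
Qed.

Lemma mx22E (R : comUnitRingType) (a b c d : R) :
  [/\ mx22 a b c d 0 0 = a, mx22 a b c d 0 1 = b,
      mx22 a b c d 1 0 = c & mx22 a b c d 1 1 = d].
Proof. by rewrite !mxE. Qed.

Lemma mul22E (R : comUnitRingType) (M N : 'M[R]_2) i j :
  (M *m N) i j = M i 0 * N 0 j + M i 1 * N 1 j.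
Proof. rewrite mxE big_ord_recr big_ord_recr big_ord0 /= add0r.
have e0 : widen_ord (leqnSn 1) ord_max = 0 :> 'I_2 by apply/val_inj.
have e1 : ord_max = 1 :> 'I_2 by apply/val_inj.
by rewrite e0 e1.
Qed.

Lemma rowmulE (R : comUnitRingType) (x : 'rV[R]_2) (M : 'M[R]_2) j :
  (x *m M) 0 j = x 0 0 * M 0 j + x 0 1 * M 1 j.
Proof. rewrite mxE big_ord_recr big_ord_recr big_ord0 /= add0r.
have e0 : widen_ord (leqnSn 1) ord_max = 0 :> 'I_2 by apply/val_inj.
have e1 : ord_max = 1 :> 'I_2 by apply/val_inj.
by rewrite e0 e1.
Qed.

Lemma unit22 (R : comUnitRingType) (a b c d : R) :
  a * d - b * c = 1 -> mx22 a b c d \in unitmx.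
Proof.
move=> h.
have [] := @mulmx1_unit R 2 (mx22 a b c d) (mx22 d (- b) (- c) a) => //.
apply: mx22_eq; rewrite !mul22E !mxE /=.
- by rewrite -h; ring.
- ring.
- ring.
- by rewrite -h; ring.
Qed.

Lemma sum2 (R : comUnitRingType) (F : 'I_2 -> R) : \sum_(j < 2) F j = F 0 + F 1.
Proof. rewrite big_ord_recr big_ord_recr big_ord0 /= add0r.
have e0 : widen_ord (leqnSn 1) ord_max = 0 :> 'I_2 by apply/val_inj.
have e1 : ord_max = 1 :> 'I_2 by apply/val_inj.
by rewrite e0 e1.
Qed.

Lemma moreover (R : comUnitRingType) (A : 'M[R]_2) :
  rowspan_has_unimodular A ->
  exists d : R, mx_equiv A (diag_mx (\row_(i < 2) if i == 0 then 1 else d)).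
Proof.
case=> x [c]; rewrite sum2 !rowmulE => hc.
pose P1 := mx22 (x 0 0) (x 0 1) (- (A 1 0 * c 0 0 + A 1 1 * c 0 1))
                (A 0 0 * c 0 0 + A 0 1 * c 0 1).
pose Q := mx22 (c 0 0) (- (x 0 0 * A 0 1 + x 0 1 * A 1 1)) (c 0 1)
               (x 0 0 * A 0 0 + x 0 1 * A 1 0).
have uP1 : P1 \in unitmx by apply: unit22; rewrite -hc; ring.
have uQ : Q \in unitmx by apply: unit22; rewrite -hc; ring.
have B00 : (P1 *m A *m Q) 0 0 = 1 by rewrite !mul22E !mxE /= -hc; ring.
have B01 : (P1 *m A *m Q) 0 1 = 0 by rewrite !mul22E !mxE /=; ring.
pose P2 := mx22 1 0 (- (P1 *m A *m Q) 1 0) 1.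
have uP2 : P2 \in unitmx by apply: unit22; ring.
exists ((P1 *m A *m Q) 1 1), (P2 *m P1), Q; split; [|split] => //.
  by rewrite unitmx_mul uP1 uP2.
have -> : P2 *m P1 *m A *m Q = P2 *m (P1 *m A *m Q) by rewrite !mulmxA.
rewrite /P2; move: (P1 *m A *m Q) B00 B01 => B B00 B01.
apply: mx22_eq; rewrite !mul22E !mxE /= ?B00 ?B01 ?mulr0n ?mulr1n; ring.
Qed.

Lemma forward (R : comUnitRingType) (A : 'M[R]_2) :
  entries_generate_unit A ->
  (exists D : 'M[R]_2, is_diag_mx D /\ mx_equiv A D) -> rowspan_has_unimodular A.
Proof.
case=> C hC [D [/is_diag_mxP hdiag [P [Q [uP [uQ hD]]]]]].
have D01 : D 0 1 = 0 by apply: hdiag.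
have D10 : D 1 0 = 0 by apply: hdiag.
have eA : A = invmx P *m D *m invmx Q.
  by rewrite hD !mulmxA mulmxK // mulVmx // mul1mx.
rewrite !sum2 eA !mul22E D01 D10 in hC.
pose Pi := invmx P; pose Qi := invmx Q.
pose x := \row_(j < 2) (P 0 j + P 1 j).
have k0 : (x *m A) 0 0 * Q 0 0 + (x *m A) 0 1 * Q 1 0 = D 0 0 + D 1 0.
  by rewrite hD !mul22E !rowmulE !mxE; ring.
have k1 : (x *m A) 0 0 * Q 0 1 + (x *m A) 0 1 * Q 1 1 = D 0 1 + D 1 1.
  by rewrite hD !mul22E !rowmulE !mxE; ring.
exists x.
move: (x *m A) k0 k1 => xA k0 k1.
rewrite D10 D01 add0r addr0 in k0 k1.
exists (\row_(j < 2) (Q j 0 * (C 0 0 * Pi 0 0 * Qi 0 0 + C 0 1 * Pi 0 0 * Qi 0 1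
                              + C 1 0 * Pi 1 0 * Qi 0 0 + C 1 1 * Pi 1 0 * Qi 0 1)
                    + Q j 1 * (C 0 0 * Pi 0 1 * Qi 1 0 + C 0 1 * Pi 0 1 * Qi 1 1
                              + C 1 0 * Pi 1 1 * Qi 1 0 + C 1 1 * Pi 1 1 * Qi 1 1))).
rewrite sum2 !mxE.
rewrite -hC -k0 -k1 /Pi /Qi; ring.
Qed.

Theorem lemma2p4 (R : comUnitRingType) (A : 'M[R]_2) :
  entries_generate_unit A ->
  ((exists D : 'M[R]_2, is_diag_mx D /\ mx_equiv A D) <-> rowspan_has_unimodular A)
  /\ (rowspan_has_unimodular A ->
      exists d : R, mx_equiv A (diag_mx (\row_(i < 2) if i == 0 then 1 else d))).
Proof.
move=> hA; split; last exact: moreover.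
split; first exact: forward.
move=> /moreover [d hd]; exists (diag_mx (\row_(i < 2) if i == 0 then 1 else d)).
by split => //; apply: diag_mx_is_diag.
Qed.
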